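(* Let $G$ be a finite abelian group and let $B\subset G$ be an irreducible balanced set. Then there exists $g\in -B$ such that $\Sigma(B+g)=\langle B+g\rangle$. That is, $B+g$ is an additive basis for the subgroup generated by $B+g$.
   Context: A set $B\subset G$ is balanced if for every $b\in B$ there exist distinct $b_1,b_2\in B$ with $2b=b_1+b_2$. A balanced set $B$ is irreducible if it does not contain two disjoint balanced subsets. For a finite set $S$, $\Sigma(S)=\{\sum_{s\in S'}s:S'\subseteq S\}$, and $\langle S\rangle$ denotes the subgroup of $G$ generated by $S$. *)

(* Defs.v *)
From mathcomp Require Import all_boot all_order all_algebra.
Set Implicit Arguments. Unset Strict Implicit. Unset Printing Implicit Defensive.
Import GRing.Theory.
Local Open Scope ring_scope.

Section Defs.
Variable G : finZmodType.

Definition balanced (B : {set G}) : Prop :=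
  B != set0 /\
  forall b, b \in B -> exists b1 b2, [/\ b1 \in B, b2 \in B, b1 != b2 &
                                      b *+ 2 = b1 + b2].

Definition irreducible_balanced (B : {set G}) : Prop :=
  balanced B /\
  ~ (exists B1 B2 : {set G}, [/\ B1 \subset B, B2 \subset B,
                                 [disjoint B1 & B2], balanced B1 & balanced B2]).

Definition subset_sums (S : {set G}) : {set G} :=
  [set \sum_(x in T) x | T : {set G} in powerset S].

Definition is_subgroup (H : {set G}) : bool :=
  (0 \in H) && [forall x in H, forall y in H, x - y \in H].

Definition gen_subgroup (S : {set G}) : {set G} :=
  \bigcap_(H : {set G} | is_subgroup H && (S \subset H)) H.

Definition translate (S : {set G}) (g : G) : {set G} := [set s + g | s in S].
Definition neg_set (S : {set G}) : {set G} := [set - s | s in S].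
End Defs.

(* Main.v *)
Require Import Defs.
From mathcomp Require Import all_boot all_order all_algebra.
From mathcomp Require Import zify.
Set Implicit Arguments. Unset Strict Implicit. Unset Printing Implicit Defensive.
Import GRing.Theory.

Section Core.
Variable G : finZmodType.
Variable S : {set G}.
Variable d : G -> nat.
Hypothesis S0 : (0%R : G) \in S.
Hypothesis step : forall s, s \in S -> s != 0%R -> exists s1 s2,
  [/\ s1 \in S, s2 \in S, (s *+ 2 = s1 + s2)%R & d s1 < d s].

Let N := \max_(s in S) d s.
Let w (x : G) := 3 ^ N - 3 ^ (N - d x).
Let m (z : G -> nat) := \sum_(x : G) z x * w x.

Lemma sum_delta (b : G) (c : nat) :
  (\sum_(x : G) x *+ (c * (x == b)))%R = (b *+ c)%R.
Proof.
rewrite (bigD1 b) //= eqxx muln1 big1 ?addr0 // => x /negbTE ->.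
by rewrite muln0 mulr0n.
Qed.

Lemma sum_delta1 (b : G) :
  (\sum_(x : G) x *+ (x == b))%R = b.
Proof.
rewrite (bigD1 b) //= eqxx big1 ?addr0 // => x /negbTE ->.
by rewrite mulr0n.
Qed.

Lemma sumn_delta1 (b : G) (f : G -> nat) :
  \sum_(x : G) (x == b) * f x = f b.
Proof.
rewrite (bigD1 b) //= eqxx mul1n big1 ?addn0 // => x /negbTE ->.
by rewrite mul0n.
Qed.

Lemma sumn_delta (b : G) (c : nat) (f : G -> nat) :
  \sum_(x : G) (c * (x == b)) * f x = c * f b.
Proof.
rewrite (bigD1 b) //= eqxx muln1 big1 ?addn0 // => x /negbTE ->.
by rewrite muln0.
Qed.

Lemma w_ineq b s1 s2 : b \in S -> s1 \in S -> s2 \in S -> d s1 < d b ->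
  w s1 + w s2 < 2 * w b.
Proof.
move=> bS s1S s2S lt.
have db : d b <= N by exact: (@leq_bigmax_cond _ (fun s => s \in S) d).
have d2 : d s2 <= N by exact: (@leq_bigmax_cond _ (fun s => s \in S) d).
have h1 : 3 * 3 ^ (N - d b) <= 3 ^ (N - d s1).
  rewrite -expnS; apply: leq_pexp2l => //; lia.
have h2 : 3 ^ (N - d s1) <= 3 ^ N by apply: leq_pexp2l => //; lia.
have h3 : 0 < 3 ^ (N - d s2) by rewrite expn_gt0.
have h4 : 3 ^ (N - d s2) <= 3 ^ N by apply: leq_pexp2l => //; lia.
rewrite /w; lia.
Qed.

Lemma fire n : forall z : G -> nat, m z < n -> (forall x, x \notin S -> z x = 0) ->
  (\sum_(x : G) x *+ z x)%R \in subset_sums S.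
Proof.
elim: n => [//|n IH] z mz supp.
case: (pickP [pred x | (x \in S) && (x != 0%R) && (1 < z x)]) => [b /= /andP[/andP[bS bn0] zb]|none].
  have [s1 [s2 [s1S s2S e lt]]] := step bS bn0.
  pose z' x := z x - 2 * (x == b) + (x == s1) + (x == s2).
  have pw x : z' x + 2 * (x == b) = z x + (x == s1) + (x == s2).
    rewrite /z'; case: (x =P b) => [->|_]; lia.
  have eqs : (\sum_(x : G) x *+ z' x = \sum_(x : G) x *+ z x)%R.
    have E : (\sum_(x : G) x *+ (z' x + 2 * (x == b)) =
              \sum_(x : G) x *+ (z x + (x == s1) + (x == s2)))%R.
      by apply: eq_bigr => x _; rewrite pw.
    move: E; under eq_bigr do rewrite mulrnDr.
    under [X in _ = X -> _]eq_bigr do rewrite !mulrnDr.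
    rewrite !big_split /= sum_delta !sum_delta1 e addrA.
    by move=> E; apply: (addIr s2); apply: (addIr s1); rewrite !(addrAC _ s2).
  have mz' : m z' < n.
    have E : \sum_(x : G) (z' x + 2 * (x == b)) * w x =
             \sum_(x : G) (z x + (x == s1) + (x == s2)) * w x.
      by apply: eq_bigr => x _; rewrite pw.
    move: E; under eq_bigr do rewrite mulnDl.
    under [X in _ = X -> _]eq_bigr do rewrite !mulnDl.
    rewrite !big_split /= sumn_delta.
    rewrite !sumn_delta1.
    have := w_ineq bS s1S s2S lt.
    rewrite /m in mz *; move: mz; move: (\sum_(i : G) z' i * w i) (\sum_(i : G) z i * w i) (w s1) (w s2) (w b); lia.
  rewrite -eqs; apply: IH => // x xS.
  have [xb xs1 xs2] : [/\ x != b, x != s1 & x != s2].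
    by split; apply: contraNneq xS => ->.
  by rewrite /z' supp // (negbTE xb) (negbTE xs1) (negbTE xs2).
have zle x : x != 0%R -> z x <= 1.
  move=> xn0; have := none x; rewrite /= xn0 andbT.
  case xS: (x \in S) => /= H; first by rewrite leqNgt H.
  by rewrite supp ?xS.
pose T := [set x | (x != 0%R) && (0 < z x)].
apply/imsetP; exists T.
  rewrite powersetE; apply/subsetP => x; rewrite inE => /andP[_ zx].
  by apply: contraLR zx => /supp ->.
rewrite [RHS]big_mkcond /=; apply: eq_bigr => x _; rewrite inE.
case: (x =P 0%R) => [->|/eqP xn0] /=; first by rewrite mul0rn.
have := zle x xn0; case: (z x) => [|[|k]] //= _; by rewrite mulr1n.
Qed.

Lemma sum_in (T : {set G}) : (\sum_(x : G) x *+ (x \in T))%R = (\sum_(x in T) x)%R.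
Proof.
rewrite [RHS]big_mkcond; apply: eq_bigr => x _.
by case: (x \in T); rewrite ?mulr1n ?mulr0n.
Qed.

Lemma add_closed x s : x \in subset_sums S -> s \in S ->
  (x + s)%R \in subset_sums S.
Proof.
case/imsetP => T; rewrite powersetE => /subsetP TS -> sS.
pose z y := (y \in T) + (y == s).
have -> : (\sum_(x in T) x + s)%R = (\sum_(x : G) x *+ z x)%R.
  under [RHS]eq_bigr do rewrite mulrnDr.
  by rewrite big_split /= sum_in sum_delta1.
apply: (@fire (m z).+1) => // y yS.
rewrite /z; case yT: (y \in T); first by move: yS; rewrite TS.
by case: (y =P s) yS => // ->; rewrite sS.
Qed.

Lemma P0 : (0%R : G) \in subset_sums S.
Proof.
apply/imsetP; exists set0; first by rewrite powersetE sub0set.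
by rewrite big_set0.
Qed.

Lemma addP_closed x y : x \in subset_sums S -> y \in subset_sums S ->
  (x + y)%R \in subset_sums S.
Proof.
move=> xP /imsetP[T]; rewrite powersetE => /subsetP TS ->.
move: x xP; apply: (big_ind (fun y => forall x, x \in subset_sums S ->
   (x + y)%R \in subset_sums S)).
- by move=> x; rewrite addr0.
- by move=> a b Ha Hb x xP; rewrite addrA; apply: Hb; apply: Ha.
- by move=> t tT x xP; apply: add_closed => //; apply: TS.
Qed.

Lemma core_eq : subset_sums S = gen_subgroup S.
Proof.
set P := subset_sums S.
have subP : is_subgroup P.
  apply/andP; split; first exact: P0.
  apply/forall_inP => x xP; apply/forall_inP => y yP.
  have : [set (p + y)%R | p in P] == P.
    rewrite eqEcard (card_imset _ (addIr y)).
    rewrite leqnn andbT; apply/subsetP => u /imsetP[p pP ->].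
    exact: addP_closed.
  move/eqP => E; move: xP; rewrite -{1}E => /imsetP[p pP ->].
  by rewrite addrK.
apply/eqP; rewrite eqEsubset; apply/andP; split.
  apply/subsetP => x xP; apply/bigcapP => H /andP[Hsub SH].
  case/imsetP: xP => T; rewrite powersetE => TS ->.
  have H0 : (0%R : G) \in H by case/andP: Hsub.
  have Hsub' : forall a b, a \in H -> b \in H -> (a - b)%R \in H.
    by move=> a b aH bH; case/andP: Hsub => _ /forall_inP/(_ a aH)/forall_inP/(_ b bH).
  apply: (big_ind (fun u => u \in H)) => //.
    move=> a b aH bH; have := Hsub' _ _ aH (Hsub' _ _ H0 bH).
    by rewrite sub0r opprK.
  by move=> t tT; apply: (subsetP SH); apply: (subsetP TS).
apply: bigcap_inf; rewrite subP /=; apply/subsetP => s sS.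
apply/imsetP; exists [set s]; first by rewrite powersetE sub1set.
by rewrite big_set1.
Qed.
End Core.

Section Reach.
Variable G : finZmodType.
Variable B : {set G}.

Definition erel : rel G := fun a c =>
  (c \in B) && [exists c2, (c2 \in B) && (c != c2) && (a *+ 2 == c + c2)%R].

Definition Rset a := [set c in B | connect erel a c].

Fixpoint Xs (bs : G) n : {set G} :=
  if n is n'.+1 then Xs bs n' :|: [set a | [exists c in Xs bs n', erel a c]]
  else [set bs].

Lemma reach : irreducible_balanced B -> exists2 bs, bs \in B &
  exists d : G -> nat, forall a, a \in B -> a != bs -> exists a1 a2,
    [/\ a1 \in B, a2 \in B, (a *+ 2 = a1 + a2)%R & d a1 < d a].
Proof.
case=> [[Bn0 balB] irr].
have [b0 b0B] := set0Pn B Bn0.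
have Rbal a : a \in B -> balanced (Rset a).
  move=> aB; split.
    by apply/set0Pn; exists a; rewrite inE aB connect0.
  move=> c; rewrite inE => /andP[cB ac].
  have [c1 [c2 [c1B c2B ne eq]]] := balB c cB.
  exists c1, c2; split => //; rewrite inE ?c1B ?c2B /=;
    apply: (connect_trans ac); apply: connect1; rewrite /erel ?c1B ?c2B /=;
    apply/existsP.
    by exists c2; rewrite c2B ne eq eqxx.
  by exists c1; rewrite c1B eq eq_sym ne addrC eqxx.
have Rsub a : Rset a \subset B by apply/subsetP => c; rewrite inE => /andP[].
have meet a a' : a \in B -> a' \in B -> exists c, (c \in Rset a) && (c \in Rset a').
  move=> aB a'B; case: (boolP [disjoint Rset a & Rset a']) => [dis|].
    by exfalso; apply: irr; exists (Rset a), (Rset a'); split => //; apply: Rbal.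
  by rewrite -setI_eq0 => /set0Pn [c]; rewrite inE => cI; exists c.
case: (arg_minnP (fun b => #|Rset b|) b0B) => bs bsB minb.
exists bs => //.
have conn a : a \in B -> connect erel a bs.
  move=> aB; have [c /andP[]] := meet a bs aB bsB.
  rewrite !inE => /andP[cB ac] /andP[_ bsc].
  have sub : Rset c \subset Rset bs.
    apply/subsetP => u; rewrite !inE => /andP[uB cu]; rewrite uB /=.
    exact: connect_trans bsc cu.
  have eqR : Rset c = Rset bs by apply/eqP; rewrite eqEcard sub minb.
  have : bs \in Rset c by rewrite eqR /Rset inE connect0 andbT.
  rewrite inE => /andP[_ cbs]; exact: connect_trans ac cbs.
pose Pn a n := (a \in Xs bs n) || ~~ connect erel a bs.
have exP a : exists n, Pn a n.
  case: (boolP (connect erel a bs)) => [/connectP [p pth lst] | nc]; last first.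
    by exists 0; rewrite /Pn nc orbT.
  exists (size p); apply/orP; left.
  elim: p a pth lst => [|c p IH] a /=; first by move=> _ ->; rewrite inE.
  move=> /andP[eac pth] lst; rewrite inE; apply/orP; right; rewrite inE.
  by apply/existsP; exists c; rewrite IH.
pose d a := ex_minn (exP a).
exists d => a aB abs.
have ca := conn a aB.
rewrite /d; case: (ex_minnP (exP a)) => n; rewrite /Pn ca orbF => Pa minn.
case: n Pa minn => [|k] /=; first by rewrite inE (negbTE abs).
rewrite inE => /orP[aX|]; first by move=> /(_ k); rewrite /Pn aX ltnn => /(_ isT).
rewrite inE => /existsP[c /andP[cX /andP[cB /existsP[c2 /andP[/andP[c2B _] /eqP eq]]]]] _.
exists c, c2; split => //.
case: (ex_minnP (exP c)) => m _ /(_ k); rewrite /Pn cX => /(_ isT).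
exact.
Qed.
End Reach.

Theorem proposition4p6 (G : finZmodType) (B : {set G}) :
  irreducible_balanced B ->
  exists2 g : G, g \in neg_set B &
    subset_sums (translate B g) = gen_subgroup (translate B g).
Proof.
move=> HB; case: (reach HB) => bs bsB [d Hd].
exists (- bs)%R; first by apply/imsetP; exists bs.
apply: (@core_eq _ _ (fun x => d (x + bs)%R)).
  by apply/imsetP; exists bs; rewrite ?subrr.
move=> s /imsetP[a aB ->] sn0.
have abs : a != bs by apply: contraNneq sn0 => ->; rewrite subrr.
have [a1 [a2 [a1B a2B e lt]]] := Hd a aB abs.
exists (a1 - bs)%R, (a2 - bs)%R; split.
- by apply/imsetP; exists a1.
- by apply/imsetP; exists a2.
- by rewrite mulrnBl e mulr2n opprD addrACA.
- by rewrite !subrK.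
Qed.
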